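(* Let $\mathbf s$ be a parity sequence for $\mathfrak{gl}_{m|n}$ and let $\mathbf s'$ be the parity sequence (for $\mathfrak{gl}_{n|m}$) defined by $s'_i=-s_{1-i}$ for all $i\in\mathbb Z$. Then there is an isomorphism of superalgebras $$\tau_{\mathbf s}:\ \mathcal E_{\mathbf s}(q_1,q_2,q_3)\to\mathcal E_{\mathbf s'}(q_3^{-1},q_2^{-1},q_1^{-1}),$$ given (coefficientwise in the generating series) by $$E_i(z)\mapsto E_{-i}(z),\qquad F_i(z)\mapsto -F_{-i}(z),\qquad K_i^\pm(z)\mapsto K_{-i}^\pm(z)\qquad(i\in\hat I).$$
   Context: Fix integers $m,n\ge 0$ with $m\ne n$ and $N=m+n\ge 3$. A parity sequence is $\mathbf s=(s_1,\dots,s_N)\in\{1,-1\}^N$ with exactly $m$ entries equal to $1$, extended to $(s_i)_{i\in\mathbb Z}$ by $s_{i+N}=s_i$. Let $\hat I=\{0,1,\dots,N-1\}$, indices always taken modulo $N$. For $i\in\hat I$ put $|i|=(1-s_is_{i+1})/2$. Define $A_{i,j}=(s_i+s_{i+1})\delta_{i,j}-s_i\delta_{i,j+1}-s_j\delta_{i+1,j}$ and $M_{i,j}$ by $M_{i+1,i}=-M_{i,i+1}=s_{i+1}$ and $M_{i,j}=0$ if $i\ne j\pm1$ ($i,j\in\hat I$). Let $\hat Q$ be the free abelian group on $\alpha_i$ ($i\in\hat I$) with symmetric bilinear form $\langle\alpha_i,\alpha_j\rangle=A_{i,j}$. Fix $d,q\in\mathbb C^\times$, put $q_1=dq^{-1}$,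 $q_2=q^2$, $q_3=d^{-1}q^{-1}$, and assume $q_1^aq_2^bq_3^c=1$ ($a,b,c\in\mathbb Z$) only if $a=b=c$. Let $\delta(z)=\sum_{n\in\mathbb Z}z^n$. $\mathcal E_{\mathbf s}=\mathcal E_{\mathbf s}(q_1,q_2,q_3)$ is the unital associative superalgebra generated by $E_{i,r},F_{i,r},H_{i,r'}$ and invertible $K_i$ ($i\in\hat I$, $r,r'\in\mathbb Z$, $r'\ne0$), with $|E_{i,r}|=|F_{i,r}|=|i|$ and all other generators even. Write $E_i(z)=\sum_kE_{i,k}z^{-k}$, $F_i(z)=\sum_kF_{i,k}z^{-k}$, $K_i^\pm(z)=K_i^{\pm1}\exp\big(\pm(q-q^{-1})\sum_{r>0}H_{i,\pm r}z^{\mp r}\big)$. Let $[X,Y]=XY-(-1)^{|X||Y|}YX$, and for homogeneous $X,Y$ of $\hat Q$-weights $\alpha,\beta$ (where $E_{i,r}$ has weight $\alpha_i$, $F_{i,r}$ weight $-\alpha_i$, $K_i,H_{i,r}$ weight $0$) let $[\![X,Y]\!]=XY-(-1)^{|X||Y|}q^{\langle\alpha,\beta\rangle}YX$. The defining relations are, for all $i,j\in\hat I$: (1) $K_iK_j=K_jK_i$, $K_iE_j(z)K_i^{-1}=q^{A_{i,j}}E_j(z)$, $K_iF_j(z)K_i^{-1}=q^{-A_{i,j}}F_j(z)$; (2) $K_i^\pm(z)K_j^\pm(w)=K_j^\pm(w)K_i^\pm(z)$, $K_i^-(z)K_j^+(w)=K_j^+(w)K_i^-(z)$; (3) $(d^{M_{i,j}}z-q^{A_{i,j}}w)K_i^\pm(z)E_j(w)=(d^{M_{i,j}}q^{A_{i,j}}z-w)E_j(w)K_i^\pm(z)$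 and $(d^{M_{i,j}}z-q^{-A_{i,j}}w)K_i^\pm(z)F_j(w)=(d^{M_{i,j}}q^{-A_{i,j}}z-w)F_j(w)K_i^\pm(z)$; (4) $[E_i(z),F_j(w)]=\frac{\delta_{i,j}}{q-q^{-1}}\big(\delta(w/z)K_i^+(w)-\delta(z/w)K_i^-(z)\big)$; (5) if $A_{i,j}=0$: $[E_i(z),E_j(w)]=0=[F_i(z),F_j(w)]$; if $A_{i,j}\ne0$: $(d^{M_{i,j}}z-q^{A_{i,j}}w)E_i(z)E_j(w)=(-1)^{|i||j|}(d^{M_{i,j}}q^{A_{i,j}}z-w)E_j(w)E_i(z)$ and $(d^{M_{i,j}}z-q^{-A_{i,j}}w)F_i(z)F_j(w)=(-1)^{|i||j|}(d^{M_{i,j}}q^{-A_{i,j}}z-w)F_j(w)F_i(z)$; (6) if $A_{i,i}\ne0$: $\mathrm{Sym}_{z_1,z_2}[\![E_i(z_1),[\![E_i(z_2),E_{i\pm1}(w)]\!]]\!]=0$ and the same with $F$ in place of $E$; if $mn\ne2$ and $A_{i,i}=0$: $\mathrm{Sym}_{z_1,z_2}[\![E_i(z_1),[\![E_{i+1}(w_1),[\![E_i(z_2),E_{i-1}(w_2)]\!]]\!]]\!]=0$ and the same with $F$; if $mn=2$ and $A_{i,i}\ne0$: $\mathrm{Sym}_{z_1,z_2}\mathrm{Sym}_{w_1,w_2}[\![E_{i-1}(z_1),[\![E_{i+1}(w_1),[\![E_{i-1}(z_2),[\![E_{i+1}(w_2),E_i(y)]\!]]\!]]\!]]\!]=\mathrm{Sym}_{z_1,z_2}\mathrm{Sym}_{w_1,w_2}[\![E_{i+1}(w_1),[\![E_{i-1}(z_1),[\![E_{i+1}(w_2),[\![E_{i-1}(z_2),E_i(y)]\!]]\!]]\!]]\!]$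 and the same with $F$. The algebra $\mathcal E_{\mathbf s'}(q_3^{-1},q_2^{-1},q_1^{-1})$ is defined in the same way with $(m,n)$ replaced by $(n,m)$, $\mathbf s$ by $\mathbf s'$, and $(q_1,q_2,q_3)$ replaced by $(q_3^{-1},q_2^{-1},q_1^{-1})$ (i.e. $(d,q)$ replaced by $(d,q^{-1})$). *)

(* Defs.v *)
From mathcomp Require Import all_boot all_algebra.
From mathcomp Require Import Rstruct complex.
Set Implicit Arguments.
Unset Strict Implicit.
Unset Printing Implicit Defensive.
Import GRing.Theory Num.Theory.
Local Open Scope ring_scope.

Notation CC := (Rdefinitions.R)[i].

(* Free unital associative C-algebra on a set X of generators,         *)
(* presented as formal terms modulo the congruence generated by the   *)
(* C-algebra axioms and a given set R of relations.  The quotient      *)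
(* term X / (congr R) is the algebra presented by generators X and     *)
(* relations R.                                                        *)

Inductive term (X : Type) : Type :=
| TG of X
| TC of CC
| TA of term X & term X
| TM of term X & term X.

Arguments TC {X}.

Definition tscal X (c : CC) (t : term X) : term X := TM (TC c) t.
Definition tneg X (t : term X) : term X := tscal (-1) t.
Definition tsub X (t u : term X) : term X := TA t (tneg u).
Definition tsum X (l : seq (term X)) : term X := foldr (@TA X) (TC 0) l.

Section Congr.
Variables (X : Type) (R : term X -> term X -> Prop).

Inductive congr : term X -> term X -> Prop :=
| cg_rel t u : R t u -> congr t u
| cg_refl t : congr t t
| cg_sym t u : congr t u -> congr u t
| cg_trans t u v : congr t u -> congr u v -> congr t v
| cg_add t t' u u' : congr t t' -> congr u u' -> congr (TA t u) (TA t' u')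
| cg_mul t t' u u' : congr t t' -> congr u u' -> congr (TM t u) (TM t' u')
| cg_addA t u v : congr (TA t (TA u v)) (TA (TA t u) v)
| cg_addC t u : congr (TA t u) (TA u t)
| cg_add0 t : congr (TA (TC 0) t) t
| cg_mulA t u v : congr (TM t (TM u v)) (TM (TM t u) v)
| cg_mul1l t : congr (TM (TC 1) t) t
| cg_mul1r t : congr (TM t (TC 1)) t
| cg_mulDl t u v : congr (TM (TA t u) v) (TA (TM t v) (TM u v))
| cg_mulDr t u v : congr (TM t (TA u v)) (TA (TM t u) (TM t v))
| cg_mul0l t : congr (TM (TC 0) t) (TC 0)
| cg_cstC c t : congr (TM (TC c) t) (TM t (TC c))
| cg_cstD a b : congr (TA (TC a) (TC b)) (TC (a + b))
| cg_cstM a b : congr (TM (TC a) (TC b)) (TC (a * b)).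
End Congr.

Fixpoint tsubst X Y (g : X -> term Y) (t : term X) : term Y :=
  match t with
  | TG x => g x
  | TC c => TC c
  | TA t u => TA (tsubst g t) (tsubst g u)
  | TM t u => TM (tsubst g t) (tsubst g u)
  end.

Inductive homog X (pg : X -> bool) : bool -> term X -> Prop :=
| h_gen x : homog pg (pg x) (TG x)
| h_cst c : homog pg false (TC c)
| h_zero p : homog pg p (TC 0)
| h_add p t u : homog pg p t -> homog pg p u -> homog pg p (TA t u)
| h_mul p p' t u : homog pg p t -> homog pg p' u -> homog pg (p (+) p') (TM t u).

(* Generators of E_s.  Index set \hat I = Z/NZ = 'Z_N (N = m+n >= 3).  *)
(*   GHp i r = H_{i,r+1},  GHm i r = H_{i,-(r+1)}   (r : nat)           *)
Inductive gen (N : nat) : Type :=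
| GE of 'Z_N & int
| GF of 'Z_N & int
| GHp of 'Z_N & nat
| GHm of 'Z_N & nat
| GK of 'Z_N
| GKinv of 'Z_N.

Section Qtor.
Variables (N : nat) (m n : nat) (s : 'Z_N -> int) (d q : CC).

Local Notation T := (term (gen N)).

(* |i| = (1 - s_i s_{i+1})/2, as a boolean *)
Definition par (i : 'Z_N) : bool := s i * s (i + 1) == -1.

Definition Amat (i j : 'Z_N) : int :=
  (s i + s (i + 1)) * ((i == j) : nat)%:Z - s i * ((i == j + 1) : nat)%:Z
  - s j * ((i + 1 == j) : nat)%:Z.

Definition Mmat (i j : 'Z_N) : int :=
  if i == j + 1 then s i else if j == i + 1 then - s j else 0.

(* weights in \hat Q = Z^{\hat I}, with the bilinear form given by A *)
Definition form (a b : 'Z_N -> int) : int :=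
  \sum_(i : 'Z_N) \sum_(j : 'Z_N) a i * b j * Amat i j.

Record hterm := HT { ht : T; hpar : bool; hwt : 'Z_N -> int }.

Definition sgn (b : bool) : CC := if b then -1 else 1.

Definition sbr (x y : hterm) : T :=
  tsub (TM (ht x) (ht y)) (tscal (sgn (hpar x && hpar y)) (TM (ht y) (ht x))).

Definition qbr (x y : hterm) : hterm :=
  HT (tsub (TM (ht x) (ht y))
        (tscal (sgn (hpar x && hpar y) * q ^ (form (hwt x) (hwt y)))
               (TM (ht y) (ht x))))
     (hpar x (+) hpar y) (fun k => hwt x k + hwt y k).

(* f = false : E ;  f = true : F *)
Definition ep (f : bool) : int := if f then -1 else 1.
Definition hX (f : bool) (i : 'Z_N) (r : int) : hterm :=
  HT (TG (if f then GF i r else GE i r)) (par i)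
     (fun k => ep f * ((k == i) : nat)%:Z).
Definition Xg (f : bool) (i : 'Z_N) (r : int) : T := ht (hX f i r).

(* p = true : H_{i,r}, r >= 1 ; p = false : H_{i,-r}, r >= 1 *)
Definition Hc (p : bool) (i : 'Z_N) (r : nat) : T :=
  TG (if p then GHp i r.-1 else GHm i r.-1).

(* coefficient of x^r in (sum_{k>=1} H_{i,+-k} x^k)^k *)
Fixpoint Xpow (p : bool) (i : 'Z_N) (k r : nat) : T :=
  match k with
  | 0 => if r == 0%N then TC 1 else TC 0
  | k'.+1 => tsum [seq TM (Hc p i a) (Xpow p i k' (r - a)) | a <- iota 1 r]
  end.

(* coefficient of x^r in exp(+-(q-q^{-1}) sum_{k>=1} H_{i,+-k} x^k) *)
Definition Expc (p : bool) (i : 'Z_N) (r : nat) : T :=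
  let c := (if p then 1 else -1) * (q - q^-1) in
  tsum [seq tscal (c ^+ k / (k`!)%:R) (Xpow p i k r) | k <- iota 0 r.+1].

(* coefficient of z^{-k} in K_i^+(z) (p = true) resp. K_i^-(z) (p = false) *)
Definition Kser (p : bool) (i : 'Z_N) (k : int) : T :=
  if p then
    (if (0 <= k)%R then TM (TG (GK i)) (Expc true i (absz k)) else TC 0)
  else
    (if (k <= 0)%R then TM (TG (GKinv i)) (Expc false i (absz k)) else TC 0).

Definition hE (i : 'Z_N) r := hX false i r.
Definition hF (i : 'Z_N) r := hX true i r.

(* defining relations (1)-(6), written coefficientwise *)
Inductive rel : T -> T -> Prop :=
| r0_KKinv i : rel (TM (TG (GK i)) (TG (GKinv i))) (TC 1)
| r0_KinvK i : rel (TM (TG (GKinv i)) (TG (GK i))) (TC 1)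
| r1_KK i j : rel (TM (TG (GK i)) (TG (GK j))) (TM (TG (GK j)) (TG (GK i)))
| r1_KX f i j r :
    rel (TM (TM (TG (GK i)) (Xg f j r)) (TG (GKinv i)))
        (tscal (q ^ (ep f * Amat i j)) (Xg f j r))
| r2_same p i j a b :
    rel (TM (Kser p i a) (Kser p j b)) (TM (Kser p j b) (Kser p i a))
| r2_mp i j a b :
    rel (TM (Kser false i a) (Kser true j b)) (TM (Kser true j b) (Kser false i a))
| r3 p f i j a b :
    rel (tsub (tscal (d ^ Mmat i j) (TM (Kser p i (a + 1)) (Xg f j b)))
              (tscal (q ^ (ep f * Amat i j)) (TM (Kser p i a) (Xg f j (b + 1)))))
        (tsub (tscal (d ^ Mmat i j * q ^ (ep f * Amat i j))
                     (TM (Xg f j b) (Kser p i (a + 1))))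
              (TM (Xg f j (b + 1)) (Kser p i a)))
| r4 i j a b :
    rel (sbr (hE i a) (hF j b))
        (tscal (((i == j) : nat)%:R / (q - q^-1))
               (tsub (Kser true i (a + b)) (Kser false i (a + b))))
| r5_zero f i j a b : Amat i j = 0 ->
    rel (sbr (hX f i a) (hX f j b)) (TC 0)
| r5 f i j a b : Amat i j != 0 ->
    rel (tsub (tscal (d ^ Mmat i j) (TM (Xg f i (a + 1)) (Xg f j b)))
              (tscal (q ^ (ep f * Amat i j)) (TM (Xg f i a) (Xg f j (b + 1)))))
        (tscal (sgn (par i && par j))
           (tsub (tscal (d ^ Mmat i j * q ^ (ep f * Amat i j))
                        (TM (Xg f j b) (Xg f i (a + 1))))
                 (TM (Xg f j (b + 1)) (Xg f i a))))
| r6a f (e : bool) i a b c : Amat i i != 0 ->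
    let k := if e then i + 1 else i - 1 in
    rel (TA (ht (qbr (hX f i a) (qbr (hX f i b) (hX f k c))))
            (ht (qbr (hX f i b) (qbr (hX f i a) (hX f k c)))))
        (TC 0)
| r6b f i a b c e : (m * n != 2)%N -> Amat i i = 0 ->
    rel (TA (ht (qbr (hX f i a) (qbr (hX f (i + 1) c)
                   (qbr (hX f i b) (hX f (i - 1) e)))))
            (ht (qbr (hX f i b) (qbr (hX f (i + 1) c)
                   (qbr (hX f i a) (hX f (i - 1) e))))))
        (TC 0)
| r6c f i a1 a2 b1 b2 c : (m * n == 2)%N -> Amat i i != 0 ->
    let L z1 z2 w1 w2 :=
      ht (qbr (hX f (i - 1) z1) (qbr (hX f (i + 1) w1)
           (qbr (hX f (i - 1) z2) (qbr (hX f (i + 1) w2) (hX f i c))))) in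
    let R z1 z2 w1 w2 :=
      ht (qbr (hX f (i + 1) w1) (qbr (hX f (i - 1) z1)
           (qbr (hX f (i + 1) w2) (qbr (hX f (i - 1) z2) (hX f i c))))) in
    rel (tsum [:: L a1 a2 b1 b2; L a2 a1 b1 b2; L a1 a2 b2 b1; L a2 a1 b2 b1])
        (tsum [:: R a1 a2 b1 b2; R a2 a1 b1 b2; R a1 a2 b2 b1; R a2 a1 b2 b1]).

(* equality in E_s = E_s(q1,q2,q3) with q1 = d q^{-1}, q2 = q^2, q3 = d^{-1} q^{-1} *)
Definition Eeq : T -> T -> Prop := congr rel.

Definition gpar (x : gen N) : bool :=
  match x with GE i _ | GF i _ => par i | _ => false end.

End Qtor.

(* Main.v *)
Require Import Defs.
From mathcomp Require Import all_boot all_algebra.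
From mathcomp Require Import Rstruct complex.
Import GRing.Theory Num.Theory.
Local Open Scope ring_scope.
From mathcomp Require Import ring zify.
From Stdlib Require Import Lia Setoid Morphisms FunctionalExtensionality.
Import GRing.Theory Num.Theory.
Local Open Scope ring_scope.
Set Implicit Arguments.
Unset Strict Implicit.
Unset Printing Implicit Defensive.

Section Alg.
Variables (X : Type) (R : term X -> term X -> Prop).
Local Notation "a ≈ b" := (congr R a b) (at level 70).

Hint Resolve cg_refl : core.
Global Instance congr_equiv : Equivalence (congr R).
Proof. split; [exact: cg_refl | exact: cg_sym | exact: cg_trans]. Qed.

Global Instance TA_proper : Proper (congr R ==> congr R ==> congr R) (@TA X).
Proof. by move=> ? ? h ? ? h'; apply: cg_add. Qed.
Global Instance TM_proper : Proper (congr R ==> congr R ==> congr R) (@TM X).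
Proof. by move=> ? ? h ? ? h'; apply: cg_mul. Qed.
Global Instance tscal_proper c : Proper (congr R ==> congr R) (@tscal X c).
Proof. by move=> ? ? h; apply: cg_mul => //; apply: cg_refl. Qed.
Global Instance tneg_proper : Proper (congr R ==> congr R) (@tneg X).
Proof. by move=> ? ? h; apply: tscal_proper. Qed.
Global Instance tsub_proper : Proper (congr R ==> congr R ==> congr R) (@tsub X).
Proof. by move=> ? ? h ? ? h'; apply: TA_proper => //; apply: tneg_proper. Qed.

Lemma tscalA a b (x : term X) : tscal a (tscal b x) ≈ tscal (a * b) x.
Proof.
rewrite /tscal; etransitivity; first exact: cg_mulA.
by apply: cg_mul; [exact: cg_cstM | reflexivity].
Qed.
Lemma tscal1 (x : term X) : tscal 1 x ≈ x.
Proof. exact: cg_mul1l. Qed.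
Lemma tscal0 (x : term X) : tscal 0 x ≈ TC 0.
Proof. exact: cg_mul0l. Qed.
Lemma tscalDr a (x y : term X) : tscal a (TA x y) ≈ TA (tscal a x) (tscal a y).
Proof. exact: cg_mulDr. Qed.
Lemma tscalDl a b (x : term X) : tscal (a + b) x ≈ TA (tscal a x) (tscal b x).
Proof.
rewrite /tscal; etransitivity; last exact: cg_mulDl.
by apply: cg_mul; [symmetry; exact: cg_cstD | reflexivity].
Qed.
Lemma TM_scall a (x y : term X) : TM (tscal a x) y ≈ tscal a (TM x y).
Proof. symmetry; exact: cg_mulA. Qed.
Lemma TM_scalr a (x y : term X) : TM x (tscal a y) ≈ tscal a (TM x y).
Proof.
rewrite /tscal; etransitivity; first exact: cg_mulA.
etransitivity; last (symmetry; exact: cg_mulA).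
by apply: cg_mul; [symmetry; exact: cg_cstC | reflexivity].
Qed.
Lemma add0t (x : term X) : TA (TC 0) x ≈ x.
Proof. exact: cg_add0. Qed.
Lemma addt0 (x : term X) : TA x (TC 0) ≈ x.
Proof. etransitivity; first exact: cg_addC. exact: cg_add0. Qed.
Lemma TM0t (x : term X) : TM (TC 0) x ≈ TC 0.
Proof. exact: cg_mul0l. Qed.
Lemma TMt0 (x : term X) : TM x (TC 0) ≈ TC 0.
Proof. etransitivity; first (symmetry; exact: cg_cstC). exact: cg_mul0l. Qed.
Lemma tscalC0 c : tscal c (TC 0 : term X) ≈ TC 0.
Proof. exact: TMt0. Qed.
Lemma TCscal c : (TC c : term X) ≈ tscal c (TC 1).
Proof. symmetry; exact: cg_mul1r. Qed.
Lemma tscalDD a (x y : term X) : TA (tscal a x) (tscal a y) ≈ tscal a (TA x y).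
Proof. symmetry; exact: tscalDr. Qed.
Lemma addtA (x y z : term X) : TA x (TA y z) ≈ TA (TA x y) z.
Proof. exact: cg_addA. Qed.
Lemma addtC (x y : term X) : TA x y ≈ TA y x.
Proof. exact: cg_addC. Qed.
Lemma tscal_eq a b (x : term X) : a = b -> tscal a x ≈ tscal b x.
Proof. by move->; reflexivity. Qed.
Lemma tscalAC a b (x : term X) : tscal a (tscal b x) ≈ tscal b (tscal a x).
Proof. by rewrite tscalA tscalA mulrC. Qed.
Lemma tsubE (x y : term X) : tsub x y = TA x (tscal (-1) y).
Proof. by []. Qed.
Lemma tsub_scal a (x y : term X) : tsub (tscal a x) (tscal a y) ≈ tscal a (tsub x y).
Proof. by rewrite !tsubE tscalDr (tscalAC a (-1)). Qed.
Lemma subtt (x : term X) : tsub x x ≈ TC 0.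
Proof.
rewrite tsubE; transitivity (TA (tscal 1 x) (tscal (-1) x)).
  by apply: cg_add; [symmetry; exact: tscal1 | reflexivity].
rewrite -tscalDl subrr; exact: tscal0.
Qed.
Lemma sub0_eq (x y : term X) : tsub x y ≈ TC 0 -> x ≈ y.
Proof.
move=> h.
have e1 : x ≈ TA (tsub x y) y.
  rewrite tsubE -addtA (addtC (tscal (-1) y)).
  transitivity (TA x (TA y (tscal (-1) y))); last by [].
  rewrite -[X in TA x X]/(tsub y y) subtt addt0; reflexivity.
by rewrite e1 h add0t.
Qed.
Lemma eq_sub0 (x y : term X) : x ≈ y -> tsub x y ≈ TC 0.
Proof. by move=> ->; exact: subtt. Qed.

Lemma tsum_cons (x : term X) l : tsum (x :: l) = TA x (tsum l).
Proof. by []. Qed.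
Lemma tsum_cat (l1 l2 : seq (term X)) : tsum (l1 ++ l2) ≈ TA (tsum l1) (tsum l2).
Proof.
elim: l1 => [|x l IH] /=; first by rewrite add0t.
by rewrite IH addtA.
Qed.
Lemma tsum_congr (I : Type) (f g : I -> term X) (l : seq I) :
  (forall x, f x ≈ g x) -> tsum (map f l) ≈ tsum (map g l).
Proof. move=> h; elim: l => [|x l IH] /=; [reflexivity | by rewrite h IH]. Qed.
Lemma tsum_scal c (l : seq (term X)) : tsum (map (tscal c) l) ≈ tscal c (tsum l).
Proof.
elim: l => [|x l IH] /=; first by rewrite tscalC0.
by rewrite IH tscalDr.
Qed.
End Alg.
Arguments tscalA {X R}.
Arguments tscal1 {X R}.
Arguments tscal0 {X R}.
Arguments tscalDr {X R}.
Arguments tscalDl {X R}.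
Arguments TM_scall {X R}.
Arguments TM_scalr {X R}.
Arguments add0t {X R}.
Arguments addt0 {X R}.
Arguments TM0t {X R}.
Arguments TMt0 {X R}.
Arguments tscalC0 {X R}.
Arguments TCscal {X R}.
Arguments tscalDD {X R}.
Arguments addtA {X R}.
Arguments addtC {X R}.
Arguments tscal_eq {X R}.
Arguments tscalAC {X R}.
Arguments tsub_scal {X R}.
Arguments subtt {X R}.
Arguments sub0_eq {X R}.
Arguments eq_sub0 {X R}.
Arguments tsum_cat {X R}.
Arguments tsum_congr {X R}.
Arguments tsum_scal {X R}.
#[global] Hint Resolve cg_refl : core.

Lemma tsubst_tsum X Y (g : X -> term Y) l : tsubst g (tsum l) = tsum (map (tsubst g) l).
Proof. by elim: l => //= x l ->. Qed.
Lemma tsubst_comp X Y Z (g : Y -> term Z) (h : X -> term Y) t :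
  tsubst g (tsubst h t) = tsubst (fun x => tsubst g (h x)) t.
Proof. by elim: t => //= ? -> ? ->. Qed.
Lemma tsubst_id X (t : term X) : tsubst (@TG X) t = t.
Proof. by elim: t => //= ? -> ? ->. Qed.
Lemma tsum_congr_in X R (I : eqType) (f g : I -> term X) (l : seq I) :
  (forall x, x \in l -> congr R (f x) (g x)) -> congr R (tsum (map f l)) (tsum (map g l)).
Proof.
elim: l => [|x l IH] h /=; first by [].
apply: cg_add; first by apply: h; rewrite inE eqxx.
by apply: IH => y yl; apply: h; rewrite inE yl orbT.
Qed.

Definition mono := (CC * seq nat)%type.
Definition ncpoly := seq mono.

Fixpoint normT (e : term nat) : ncpoly :=
  match e with
  | TG k => [:: (1, [:: k])]
  | TC c => [:: (c, [::])]
  | TA a b => normT a ++ normT b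
  | TM a b => flatten (map (fun m1 => map (fun m2 => (m1.1 * m2.1, m1.2 ++ m2.2)) (normT b)) (normT a))
  end.

Fixpoint weq (w1 w2 : seq nat) : bool :=
  match w1, w2 with
  | [::], [::] => true
  | a :: w1', b :: w2' => eqn a b && weq w1' w2'
  | _, _ => false
  end.

Lemma weqE w1 w2 : weq w1 w2 = (w1 == w2).
Proof. by elim: w1 w2 => [|a w1 IH] [|b w2] //=; rewrite IH eqseq_cons. Qed.

Definition coef (w : seq nat) (p : ncpoly) : CC :=
  foldr (fun m acc => if weq m.2 w then m.1 + acc else acc) 0 p.

Fixpoint allC (l : seq (seq nat)) (P : seq nat -> Prop) : Prop :=
  match l with [::] => True | w :: l' => P w /\ allC l' P end.

Lemma allCP l P : allC l P -> forall w, w \in l -> P w.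
Proof. elim: l => //= a l IH [h1 h2] w; rewrite inE => /orP[/eqP->//|]; exact: IH. Qed.

Section Refl.
Variables (X : Type) (R : term X -> term X -> Prop) (env : nat -> term X).
Local Notation "a ≈ b" := (congr R a b) (at level 70).

Definition iW (w : seq nat) : term X := foldr (fun k acc => TM (env k) acc) (TC 1) w.
Definition iP (p : ncpoly) : term X := tsum (map (fun m => tscal m.1 (iW m.2)) p).

Lemma iW_cat w1 w2 : iW (w1 ++ w2) ≈ TM (iW w1) (iW w2).
Proof.
elim: w1 => [|a w IH] /=; first by symmetry; exact: cg_mul1l.
by rewrite IH cg_mulA.
Qed.

Lemma iP_cat p1 p2 : iP (p1 ++ p2) ≈ TA (iP p1) (iP p2).
Proof. by rewrite /iP map_cat tsum_cat. Qed.

Lemma iP_flatten (l : seq ncpoly) : iP (flatten l) ≈ tsum (map iP l).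
Proof. elim: l => [|p l IH] //=; by rewrite iP_cat IH. Qed.

Lemma iP_mul1 (m : mono) p :
  iP (map (fun m2 => (m.1 * m2.1, m.2 ++ m2.2)) p) ≈ TM (tscal m.1 (iW m.2)) (iP p).
Proof.
elim: p => [|m2 p IH] /=; first by rewrite TMt0.
rewrite cg_mulDr -IH; apply: cg_add => //.
by rewrite iW_cat TM_scall TM_scalr tscalA.
Qed.

Lemma iP_mul p1 p2 :
  iP (flatten (map (fun m1 => map (fun m2 => (m1.1 * m2.1, m1.2 ++ m2.2)) p2) p1))
  ≈ TM (iP p1) (iP p2).
Proof.
elim: p1 => [|m p IH] /=; first by rewrite TM0t.
by rewrite iP_cat IH iP_mul1 cg_mulDl.
Qed.

Lemma normT_ok e : tsubst env e ≈ iP (normT e).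
Proof.
elim: e => [k|c|a IHa b IHb|a IHa b IHb] /=.
- rewrite /iP /= addt0 /tscal cg_mul1l cg_mul1r; reflexivity.
- rewrite /iP /= addt0 /tscal cg_mul1r; reflexivity.
- by rewrite iP_cat IHa IHb.
- by rewrite iP_mul IHa IHb.
Qed.

Lemma iP_scal c p : iP (map (fun m => (c * m.1, m.2)) p) ≈ tscal c (iP p).
Proof.
rewrite /iP; elim: p => [|m p IH] /=; first by rewrite tscalC0.
by rewrite IH tscalDr tscalA.
Qed.

Lemma coef_cons m p w : coef w (m :: p) = (if m.2 == w then m.1 else 0) + coef w p.
Proof. by rewrite /coef /= weqE; case: (m.2 == w); rewrite ?add0r. Qed.

Lemma iP_zeroW (W : seq (seq nat)) : iP (map (fun w => (0, w)) W) ≈ TC 0.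
Proof. rewrite /iP; elim: W => [|w W IH] //=; by rewrite IH tscal0 add0t. Qed.

Lemma iP_addW (W : seq (seq nat)) f g :
  iP (map (fun w => (f w + g w, w)) W) ≈
  TA (iP (map (fun w => (f w, w)) W)) (iP (map (fun w => (g w, w)) W)).
Proof.
rewrite /iP; elim: W => [|w W IH] /=; first by rewrite add0t.
rewrite IH tscalDl /=.
set a := tscal (f w) _; set b := tscal (g w) _.
set A := tsum _; set B := tsum _.
rewrite -!addtA; apply: cg_add => //.
by rewrite addtA (addtC b A) -addtA.
Qed.

Lemma iP_cons m p : iP (m :: p) = TA (tscal m.1 (iW m.2)) (iP p).
Proof. by []. Qed.

Lemma iP_single (W : seq (seq nat)) c w0 :
  uniq W -> w0 \in W ->
  iP (map (fun w => (if w0 == w then c else 0, w)) W) ≈ tscal c (iW w0).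
Proof.
elim: W => [|w W IH] // /andP[nW uW]; rewrite map_cons iP_cons inE => /orP[/eqP e|iW0] /=.
- subst w; rewrite eqxx.
  transitivity (TA (tscal c (iW w0)) (TC 0)); last exact: addt0.
  apply: cg_add => //.
  transitivity (iP (map (fun w => (0, w)) W)); last exact: iP_zeroW.
  rewrite /iP -!map_comp; apply: tsum_congr_in => w wW /=.
  by case: eqP => // e; move: nW; rewrite e wW.
- have -> : (w0 == w) = false by apply/negP => /eqP e; by move: nW; rewrite -e iW0.
  by rewrite IH // tscal0 add0t.
Qed.

Lemma iP_coefW p (W : seq (seq nat)) :
  uniq W -> {subset map snd p <= W} ->
  iP p ≈ iP (map (fun w => (coef w p, w)) W).
Proof.
move=> uW; elim: p => [|m p IH] sub.
  by rewrite iP_zeroW.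
have -> : map (fun w => (coef w (m :: p), w)) W =
          map (fun w => ((if m.2 == w then m.1 else 0) + coef w p, w)) W.
  by apply: eq_map => w; rewrite coef_cons.
rewrite iP_addW iP_single //; last by apply: sub; rewrite inE eqxx.
rewrite -IH //; move=> w wp; apply: sub; by rewrite inE wp orbT.
Qed.

Lemma poly_eq p1 p2 :
  allC (map snd (p1 ++ p2)) (fun w => coef w p1 = coef w p2) -> iP p1 ≈ iP p2.
Proof.
move=> /allCP h.
set W := undup (map snd (p1 ++ p2)).
have uW : uniq W by apply: undup_uniq.
rewrite (@iP_coefW p1 W) //; last by move=> w; rewrite mem_undup map_cat mem_cat => ->.
rewrite (@iP_coefW p2 W) //; last by move=> w; rewrite mem_undup map_cat mem_cat orbC => ->.
have -> // : map (fun w => (coef w p1, w)) W = map (fun w => (coef w p2, w)) W.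
apply/eq_in_map => w; rewrite mem_undup => /h -> //.
Qed.

Lemma refl_eq e1 e2 :
  allC (map snd (normT e1 ++ normT e2)) (fun w => coef w (normT e1) = coef w (normT e2)) ->
  tsubst env e1 ≈ tsubst env e2.
Proof. by move=> h; rewrite !normT_ok; apply: poly_eq. Qed.
End Refl.

Section RW.
Variable rw : nat -> nat -> option ncpoly.
Fixpoint stepW (w : seq nat) : option ncpoly :=
  match w with
  | a :: ((b :: t') as t) =>
      match rw a b with
      | Some l => Some (map (fun m => (m.1, m.2 ++ t')) l)
      | None => match stepW t with
                | Some l => Some (map (fun m => (m.1, a :: m.2)) l)
                | None => None end
      end
  | _ => None
  end.
Fixpoint nf (fuel : nat) (p : ncpoly) : ncpoly :=
  match fuel with
  | 0%N => p
  | S f => flatten (map (fun m => match stepW m.2 with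
                                  | None => [:: m]
                                  | Some l => nf f (map (fun m' => (m.1 * m'.1, m'.2)) l)
                                  end) p)
  end.

Variables (X : Type) (R : term X -> term X -> Prop) (env : nat -> term X).
Local Notation "a ≈ b" := (congr R a b) (at level 70).
Hypothesis rwok : forall a b l, rw a b = Some l -> TM (env a) (env b) ≈ iP env l.

Lemma iP_appr l t : iP env (map (fun m => (m.1, m.2 ++ t)) l) ≈ TM (iP env l) (iW env t).
Proof.
elim: l => [|m l IH]; first by rewrite TM0t.
by rewrite map_cons !iP_cons IH cg_mulDl iW_cat TM_scall.
Qed.
Lemma iP_consl l a : iP env (map (fun m => (m.1, a :: m.2)) l) ≈ TM (env a) (iP env l).
Proof.
elim: l => [|m l IH]; first by rewrite TMt0.
by rewrite map_cons !iP_cons IH cg_mulDr TM_scalr.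
Qed.
Lemma stepW_ok w l : stepW w = Some l -> iW env w ≈ iP env l.
Proof.
have E a b t' : stepW [:: a, b & t'] = match rw a b with
      | Some l => Some (map (fun m => (m.1, m.2 ++ t')) l)
      | None => match stepW (b :: t') with
                | Some l => Some (map (fun m => (m.1, a :: m.2)) l)
                | None => None end
      end by [].
elim: w l => [|a [|b t'] IH] l //; rewrite E.
case e: (rw a b) => [l'|].
  case=> <-; rewrite iP_appr -(rwok e) /= -cg_mulA; reflexivity.
move: IH; case: (stepW (b :: t')) => [l'|] // IH [<-].
by rewrite iP_consl -(IH l') //.
Qed.
Lemma nf_ok f p : iP env (nf f p) ≈ iP env p.
Proof.
elim: f p => [|f IHf] p //=.
rewrite iP_flatten.
elim: p => [|m p IH] //=.
rewrite IH iP_cons; apply: cg_add => //.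
case e: (stepW m.2) => [l|] /=.
  rewrite IHf iP_scal -(stepW_ok e); reflexivity.
by rewrite /iP /= addt0.
Qed.
Lemma refl_eq_rw f e1 e2 :
  allC (map snd (nf f (normT e1) ++ nf f (normT e2)))
       (fun w => coef w (nf f (normT e1)) = coef w (nf f (normT e2))) ->
  tsubst env e1 ≈ tsubst env e2.
Proof.
by move=> h; rewrite !normT_ok -(nf_ok f (normT e1)) -(nf_ok f (normT e2)); apply: poly_eq.
Qed.
End RW.

Definition br (x y : term nat) (c : CC) : term nat := tsub (TM x y) (tscal c (TM y x)).
Definition OrigT al be ga : term nat :=
  TA (br (TG 0%N) (br (TG 2%N) (br (TG 1%N) (TG 3%N) al) be) ga)
     (br (TG 1%N) (br (TG 2%N) (br (TG 0%N) (TG 3%N) al) be) ga).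
Definition SwapT al be ga : term nat :=
  TA (br (TG 0%N) (br (TG 3%N) (br (TG 1%N) (TG 2%N) al) be) ga)
     (br (TG 1%N) (br (TG 3%N) (br (TG 0%N) (TG 2%N) al) be) ga).
Definition rw6 (sig : CC) (a b : nat) : option ncpoly :=
  match a, b with
  | 1%N, 0%N => Some [:: (-1, [:: 0%N; 1%N])]
  | 0%N, 0%N => Some [::]
  | 1%N, 1%N => Some [::]
  | 3%N, 2%N => Some [:: (sig, [:: 2%N; 3%N])]
  | _, _ => None
  end.

Lemma core6 X (R : term X -> term X -> Prop) (env : nat -> term X)
   (t : CC) (pY pZ : bool) :
  t != 0 ->
  (forall a b l, rw6 (sgn (pZ && pY)) a b = Some l -> congr R (TM (env a) (env b)) (iP env l)) ->
  congr R (tsubst env (SwapT (sgn pY * t) (sgn (pZ && ~~ pY) / t) (sgn (~~ (pZ (+) pY)))))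
          (tsubst env (TM (TC (sgn pY * t * (sgn (pZ && ~~ pY) / t)))
                          (OrigT (sgn pZ / t) (sgn (pY && ~~ pZ) * t) (sgn (~~ (pY (+) pZ)))))).
Proof.
move=> t0 rwok.
apply: (refl_eq_rw (f:=10) rwok).
lazy beta iota zeta delta [normT nf stepW coef weq allC SwapT OrigT br tsub tscal tneg rw6 map flatten foldr cat eqn andb fst snd].
clear rwok; case: pY; case: pZ; rewrite /sgn /=; (repeat split); field; exact: t0.
Qed.

Definition sneg N (s : 'Z_N -> int) : 'Z_N -> int := fun i => - s (1 - i).

Definition tau N (x : gen N) : term (gen N) :=
  match x with
  | GE i r => TG (GE (- i) r)
  | GF i r => tneg (TG (GF (- i) r))
  | GHp i r => tneg (TG (GHp (- i) r))
  | GHm i r => tneg (TG (GHm (- i) r))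
  | GK i => TG (GK (- i))
  | GKinv i => TG (GKinv (- i))
  end.

Lemma Zeq_neg N (i j : 'Z_N) : (- i == - j) = (i == j).
Proof. by rewrite eqr_opp. Qed.
Lemma Zeq_negS N (i j : 'Z_N) : (- i == - j + 1) = (i + 1 == j).
Proof.
apply/eqP/eqP => h.
- by rewrite -(opprK i) h; ring.
- by rewrite -h; ring.
Qed.
Lemma Zeq_Sneg N (i j : 'Z_N) : (- i + 1 == - j) = (i == j + 1).
Proof. by rewrite eq_sym Zeq_negS eq_sym. Qed.

Section Idx.
Variables (N : nat) (s : 'Z_N -> int).
Local Notation s' := (sneg s).

Lemma sneg_neg i : s' (- i) = - s (i + 1).
Proof. by rewrite /sneg; congr (- s _); ring. Qed.
Lemma sneg_negS i : s' (- i + 1) = - s i.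
Proof. by rewrite /sneg; congr (- s _); ring. Qed.

Lemma par_neg i : par s' (- i) = par s i.
Proof. by rewrite /par sneg_negS sneg_neg mulrNN mulrC. Qed.

Lemma eqmul (f : 'Z_N -> int) (a b : 'Z_N) :
  f b * ((a == b) : nat)%:Z = f a * ((a == b) : nat)%:Z.
Proof. by case: eqP => [->|_] //; rewrite !mulr0. Qed.

Lemma eqmulS (a b : 'Z_N) :
  s (b + 1) * ((a == b) : nat)%:Z = s (a + 1) * ((a == b) : nat)%:Z.
Proof. by case: eqP => [->|_] //; rewrite !mulr0. Qed.

Lemma Amat_sym i j : Amat s i j = Amat s j i.
Proof.
rewrite /Amat (eq_sym j i) (eq_sym j (i + 1)) (eq_sym (j + 1) i) !mulrDl.
rewrite (eqmul s i j) (eqmulS i j); ring.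
Qed.

Lemma Amat_neg i j : Amat s' (- i) (- j) = - Amat s i j.
Proof.
rewrite /Amat Zeq_neg Zeq_negS Zeq_Sneg sneg_neg sneg_negS sneg_neg.
rewrite !mulNr -(eqmul s (i + 1) j) (eqmul s i (j + 1)); ring.
Qed.
End Idx.

Lemma Z2 N : (2 < N)%N -> forall i : 'Z_N, i + 1 + 1 != i.
Proof.
case: N => [|[|[|k]]] // _ i; apply/eqP => h.
have : (1 + 1 : 'Z_k.+3) = 0 by rewrite -[LHS](addKr i) (addrA i 1 1) h addNr.
move/(congr1 val) => /=; rewrite !modn_small //.
Qed.

Section Idx2.
Variables (N : nat) (s : 'Z_N -> int).
Hypothesis N3 : (2 < N)%N.
Local Notation s' := (sneg s).

Lemma Mmat_neg i j : Mmat s' (- i) (- j) = Mmat s i j.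
Proof.
rewrite /Mmat Zeq_negS (Zeq_negS j i).
case: (i + 1 =P j) => [<-|ne].
  rewrite (eq_sym i) (negbTE (Z2 N3 i)) eqxx sneg_neg //.
rewrite (eq_sym j (i + 1)) (introF eqP ne) (eq_sym i (j + 1)).
by case: ifP => //; rewrite sneg_neg opprK => /eqP ->.
Qed.
End Idx2.

Lemma form_neg N (s : 'Z_N -> int) a b a' b' :
  (forall k, a' k = a (- k)) -> (forall k, b' k = b (- k)) ->
  Defs.form (sneg s) a' b' = - Defs.form s a b.
Proof.
move=> ha hb; rewrite /Defs.form (reindex_inj oppr_inj) -sumrN; apply: eq_bigr => i _.
rewrite (reindex_inj oppr_inj) -sumrN; apply: eq_bigr => j _.
by rewrite ha hb !opprK Amat_neg mulrN.
Qed.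

Definition epC (f : bool) : CC := if f then -1 else 1.
Lemma epC2 f : epC f * epC f = 1.
Proof. by case: f; rewrite /epC ?mulrNN mulr1. Qed.

Section Maps.
Variables (N : nat) (s : 'Z_N -> int) (q : CC) (R : term (gen N) -> term (gen N) -> Prop).
Local Notation "a ≈ b" := (congr R a b) (at level 70).
Local Notation s' := (sneg s).

Definition mapsH (x x' : hterm N) (c : CC) :=
  tsubst (@tau N) (ht x) ≈ tscal c (ht x') /\ hpar x' = hpar x /\
  (forall k, hwt x' k = hwt x (- k)).

Lemma mapsH_hX f i r : mapsH (hX s f i r) (hX s' f (- i) r) (epC f).
Proof.
split; [|split].
- by case: f => /=; [reflexivity | rewrite tscal1].
- exact: par_neg.
- by move=> k /=; rewrite -eqr_oppLR.
Qed.

Lemma expVN (z : int) : (q^-1) ^ (- z) = q ^ z.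
Proof. by rewrite exprz_inv opprK. Qed.

Lemma mapsH_qbr x x' c1 y y' c2 : mapsH x x' c1 -> mapsH y y' c2 ->
  mapsH (qbr s q x y) (qbr s' q^-1 x' y') (c1 * c2).
Proof.
move=> [hx [px wx]] [hy [py wy]]; split; [|split].
- rewrite /= -/(tsubst (@tau N) (ht x)) -/(tsubst (@tau N) (ht y)).
  change (tsub (TM (tsubst (@tau N) (ht x)) (tsubst (@tau N) (ht y)))
     (tscal (sgn (hpar x && hpar y) * q ^ Defs.form s (hwt x) (hwt y))
            (TM (tsubst (@tau N) (ht y)) (tsubst (@tau N) (ht x))))
     ≈ tscal (c1 * c2) (tsub (TM (ht x') (ht y'))
      (tscal (sgn (hpar x' && hpar y') * q^-1 ^ Defs.form s' (hwt x') (hwt y'))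
        (TM (ht y') (ht x'))))).
  rewrite hx hy !TM_scall !TM_scalr !tscalA -(mulrA _ c2 c1) (mulrC c2 c1) [_ * (c1 * c2)]mulrC -(tscalA (c1 * c2)) tsub_scal px py.
  rewrite (form_neg s wx wy) expVN; reflexivity.
- by rewrite /= px py.
- by move=> k /=; rewrite wx wy.
Qed.
Lemma mapsH_sbr x x' c1 y y' c2 : mapsH x x' c1 -> mapsH y y' c2 ->
  tsubst (@tau N) (sbr x y) ≈ tscal (c1 * c2) (sbr x' y').
Proof.
move=> [hx [px wx]] [hy [py wy]].
change (tsub (TM (tsubst (@tau N) (ht x)) (tsubst (@tau N) (ht y)))
     (tscal (sgn (hpar x && hpar y)) (TM (tsubst (@tau N) (ht y)) (tsubst (@tau N) (ht x))))
     ≈ tscal (c1 * c2) (tsub (TM (ht x') (ht y'))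
      (tscal (sgn (hpar x' && hpar y')) (TM (ht y') (ht x'))))).
rewrite hx hy !TM_scall !TM_scalr !tscalA -(mulrA _ c2 c1) (mulrC c2 c1) [_ * (c1 * c2)]mulrC -(tscalA (c1 * c2)) tsub_scal px py.
reflexivity.
Qed.
End Maps.

Section KserMap.
Variables (N : nat) (q : CC) (R : term (gen N) -> term (gen N) -> Prop).
Local Notation "a ≈ b" := (congr R a b) (at level 70).
Local Notation tauS := (tsubst (@tau N)).

Lemma tau_Hc p i a : tauS (Hc p i a) = tscal (-1) (Hc p (- i) a).
Proof. by case: p. Qed.

Lemma tau_Xpow p i k r : tauS (Xpow p i k r) ≈ tscal ((-1) ^+ k) (Xpow p (- i) k r).
Proof.
elim: k r => [|k IH] r.
  by rewrite expr0 tscal1 /=; case: (r == 0%N).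
rewrite [Xpow _ _ k.+1 _]/= tsubst_tsum -map_comp.
transitivity (tsum (map (fun a => tscal ((-1) ^+ k.+1) (TM (Hc p (- i) a) (Xpow p (- i) k (r - a)))) (iota 1 r))).
  apply: tsum_congr => a; change (TM (tauS (Hc p i a)) (tauS (Xpow p i k (r - a))) ≈ tscal ((-1) ^+ k.+1) (TM (Hc p (- i) a) (Xpow p (- i) k (r - a)))).
  rewrite tau_Hc IH.
  by rewrite TM_scall TM_scalr tscalA exprS mulrC.
by rewrite map_comp tsum_scal.
Qed.

Lemma tau_Expc p i r : tauS (Expc q p i r) ≈ Expc q^-1 p (- i) r.
Proof.
rewrite /Expc tsubst_tsum -map_comp; apply: tsum_congr => k /=.
rewrite -/(tauS (Xpow p i k r)) tau_Xpow.
transitivity (tscal ((((if p then 1 else -1) * (q - q^-1)) ^+ k / (k`!)%:R) * (-1) ^+ k) (Xpow p (- i) k r)).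
  exact: tscalA.
apply: tscal_eq.
rewrite invrK mulrAC -exprMn; congr (_ ^+ _ / _).
by rewrite mulrN1 -mulrN opprB.
Qed.

Lemma tau_Kser p i k : tauS (Kser q p i k) ≈ Kser q^-1 p (- i) k.
Proof.
rewrite /Kser; case: p; case: ifP => _; try reflexivity.
- change (TM (tau (GK i)) (tauS (Expc q true i `|k|%N)) ≈ TM (TG (GK (- i))) (Expc q^-1 true (- i) `|k|%N)).
  by rewrite tau_Expc.
- change (TM (tau (GKinv i)) (tauS (Expc q false i `|k|%N)) ≈ TM (TG (GKinv (- i))) (Expc q^-1 false (- i) `|k|%N)).
  by rewrite tau_Expc.
Qed.
End KserMap.

Lemma Zk N (k : nat) : (0 < k < N)%N -> forall i : 'Z_N, (i + k%:R == i) = false.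
Proof.
move=> /andP[k0 kN] i; apply/negbTE/eqP => h.
have N1 : (1 < N)%N by lia.
have : (k%:R : 'Z_N) = 0 by rewrite -[LHS](addKr i) h addNr.
move/(congr1 val) => /=; rewrite (val_Zp_nat N1) modn_small //; lia.
Qed.

Lemma form_qbr_r N (s : 'Z_N -> int) (q : CC) a x y : Defs.form s a (hwt (qbr s q x y)) =
  Defs.form s a (hwt x) + Defs.form s a (hwt y).
Proof.
rewrite /Defs.form -big_split /=; apply: eq_bigr => i _.
rewrite -big_split /=; apply: eq_bigr => j _; ring.
Qed.

Lemma form_hX N (s : 'Z_N -> int) f f' i j a b :
  Defs.form s (hwt (hX s f i a)) (hwt (hX s f' j b)) = ep f * ep f' * Amat s i j.
Proof.
rewrite /Defs.form (bigD1 i) //= [X in _ + X]big1 => [|k nk]; last first.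
  by rewrite big1 // => l _; rewrite (negbTE nk) /=; ring.
rewrite (bigD1 j) //= [X in _ + X + _]big1 => [|k nk]; last by rewrite (negbTE nk) /=; ring.
rewrite !eqxx /=; ring.
Qed.

Definition cq N (s : 'Z_N -> int) (q : CC) (x y : hterm N) : CC :=
  sgn (hpar x && hpar y) * q ^ Defs.form s (hwt x) (hwt y).

Lemma ep2 f : ep f * ep f = 1.
Proof. by case: f. Qed.

Lemma eq_diff N (x y c : 'Z_N) : y - x = c -> (x == y) = (c == 0).
Proof.
move=> <-; apply/eqP/eqP => [->|h]; first by rewrite subrr.
by rewrite -(subrK x y) h add0r.
Qed.

Lemma Zkz N (k : nat) : (0 < k < N)%N -> ((k%:R : 'Z_N) == 0) = false.
Proof.
move=> /andP[k0 kN]; apply/negbTE/eqP => h.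
have N1 : (1 < N)%N by lia.
move: h => /(congr1 val) /=; rewrite (val_Zp_nat N1) modn_small //; lia.
Qed.

Lemma neg_self0 X (R : term X -> term X -> Prop) (x : term X) :
  congr R x (tscal (-1) x) -> congr R x (TC 0).
Proof.
move=> h.
have h2 : congr R (tscal (1 + 1) x) (TC 0).
  by rewrite tscalDl tscal1 {2}h -/(tsub x x) subtt.
have n2 : (1 + 1 : CC) != 0 by rewrite -[1 + 1]/(2%:R) pnatr_eq0.
rewrite -(tscal1 x) -(mulVf n2) -tscalA h2 tscalC0; reflexivity.
Qed.

Lemma zneq N (x y : 'Z_N) (k : nat) : (0 < k < N)%N -> y - x = k%:R -> (x == y) = false.
Proof. by move=> hk e; rewrite (eq_diff e) Zkz. Qed.

Section Serre.
Variables (N m n : nat) (s : 'Z_N -> int) (d q : CC).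
Hypotheses (N4 : (3 < N)%N) (s1 : forall i, s i = 1 \/ s i = -1) (q0 : q != 0).
Local Notation R := (Defs.rel m n s d q).
Variable i : 'Z_N.
Hypotheses (Aii : Amat s i i = 0) (mn : (m * n != 2)%N).

Let e01 : (i == i + 1) = false.
Proof. by apply: (zneq (k:=1)); [lia | ring]. Qed.
Let e10 : (i + 1 == i) = false.
Proof. by rewrite eq_sym e01. Qed.
Let e02 : (i == i + 1 + 1) = false.
Proof. by apply: (zneq (k:=2)); [lia | ring]. Qed.
Let em0 : (i == i - 1) = false.
Proof. by rewrite eq_sym; apply: (zneq (k:=1)); [lia | ring]. Qed.
Let e1m : (i + 1 == i - 1) = false.
Proof. by rewrite eq_sym; apply: (zneq (k:=2)); [lia | ring]. Qed.
Let em1 : (i - 1 == i + 1) = false.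
Proof. by apply: (zneq (k:=2)); [lia | ring]. Qed.
Let em2 : (i - 1 == i + 1 + 1) = false.
Proof. by apply: (zneq (k:=3)); [lia | ring]. Qed.
Let em0' : (i - 1 + 1 == i + 1) = false.
Proof. by apply: (zneq (k:=1)); [lia | ring]. Qed.
Let emm : (i == i - 1 + 1).
Proof. by rewrite subrK. Qed.

Lemma sisum : s i + s (i + 1) = 0.
Proof. move: Aii; rewrite /Amat eqxx e01 e10 /=; lia. Qed.

Lemma A_i_ip1 : Amat s i (i + 1) = s i.
Proof. move: sisum; rewrite /Amat e01 e02 eqxx /=; lia. Qed.
Lemma A_ip1_i : Amat s (i + 1) i = s i.
Proof. by rewrite Amat_sym A_i_ip1. Qed.
Lemma A_i_im1 : Amat s i (i - 1) = - s i.
Proof. rewrite /Amat em0 emm e1m /=; lia. Qed.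
Lemma A_im1_i : Amat s (i - 1) i = - s i.
Proof. by rewrite Amat_sym A_i_im1. Qed.
Lemma A_im1_ip1 : Amat s (i - 1) (i + 1) = 0.
Proof. rewrite /Amat em1 em2 em0' /=; lia. Qed.
Lemma A_ip1_im1 : Amat s (i + 1) (i - 1) = 0.
Proof. by rewrite Amat_sym A_im1_ip1. Qed.

Lemma par_i : par s i.
Proof.
rewrite /par; have := sisum; have := s1 i; have := s1 (i + 1).
by case=> ->; case=> -> //.
Qed.

Local Notation X f k r := (hX s f k r).
Local Notation Q := (qbr s q).

Lemma swapped_serre f a b c e :
  congr R (TA (ht (Q (X f i a) (Q (X f (i - 1) c) (Q (X f i b) (X f (i + 1) e)))))
              (ht (Q (X f i b) (Q (X f (i - 1) c) (Q (X f i a) (X f (i + 1) e))))))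
          (TC 0).
Proof.
pose env (k : nat) : term (gen N) :=
  match k with 0%N => Xg s f i a | 1%N => Xg s f i b | 2%N => Xg s f (i + 1) e
             | _ => Xg s f (i - 1) c end.
pose pY := par s (i + 1); pose pZ := par s (i - 1).
pose t := q ^ s i.
have t0 : t != 0 by rewrite /t expfz_neq0.
change (congr R (tsubst env (SwapT (cq s q (X f i b) (X f (i + 1) e))
          (cq s q (X f (i - 1) c) (Q (X f i b) (X f (i + 1) e)))
          (cq s q (X f i a) (Q (X f (i - 1) c) (Q (X f i b) (X f (i + 1) e)))))) (TC 0)).
have pi := par_i.
have E1 : cq s q (X f i b) (X f (i + 1) e) = sgn pY * t.
  by rewrite /cq form_hX (ep2 f) /= pi mul1r A_i_ip1.
have E2 : cq s q (X f (i - 1) c) (Q (X f i b) (X f (i + 1) e)) = sgn (pZ && ~~ pY) / t.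
  by rewrite /cq form_qbr_r !form_hX !(ep2 f) /= pi !mul1r A_im1_i A_im1_ip1 addr0 invr_expz.
have E3 : cq s q (X f i a) (Q (X f (i - 1) c) (Q (X f i b) (X f (i + 1) e))) = sgn (~~ (pZ (+) pY)).
  rewrite /cq !form_qbr_r !form_hX !(ep2 f) /= pi !mul1r A_i_im1 A_i_ip1 Aii add0r addNr expr0z mulr1.
  by rewrite /pY /pZ; case: (par s (i + 1)); case: (par s (i - 1)).
have E4 : cq s q (X f i b) (X f (i - 1) c) = sgn pZ / t.
  by rewrite /cq form_hX (ep2 f) /= pi mul1r A_i_im1 invr_expz.
have E5 : cq s q (X f (i + 1) e) (Q (X f i b) (X f (i - 1) c)) = sgn (pY && ~~ pZ) * t.
  by rewrite /cq form_qbr_r !form_hX !(ep2 f) /= pi !mul1r A_ip1_i A_ip1_im1 addr0.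
have E6 : cq s q (X f i a) (Q (X f (i + 1) e) (Q (X f i b) (X f (i - 1) c))) = sgn (~~ (pY (+) pZ)).
  rewrite /cq !form_qbr_r !form_hX !(ep2 f) /= pi !mul1r A_i_im1 A_i_ip1 Aii add0r subrr expr0z mulr1.
  by rewrite /pY /pZ; case: (par s (i + 1)); case: (par s (i - 1)).
rewrite E1 E2 E3.
have rwok : forall a0 b0 l, rw6 (sgn (pZ && pY)) a0 b0 = Some l ->
    congr R (TM (env a0) (env b0)) (iP env l).
  have hXX : forall u v, congr R (TM (Xg s f i u) (Xg s f i v)) (tscal (-1) (TM (Xg s f i v) (Xg s f i u))).
    move=> u v; have := @sub0_eq _ _ _ _ (cg_rel (@r5_zero _ m n s d q f i i u v Aii)).
    by rewrite /sbr /= pi.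
  move=> [|[|[|[|k]]]] [|[|[|[|k']]]] l //= [<-]; rewrite /iP /=.
  - by apply: neg_self0; apply: hXX.
  - by rewrite cg_mul1r addt0; apply: hXX.
  - by apply: neg_self0; apply: hXX.
  - rewrite cg_mul1r addt0.
    have := @sub0_eq _ _ _ _ (cg_rel (@r5_zero _ m n s d q f (i - 1) (i + 1) c e A_im1_ip1)).
    by rewrite /sbr /=.
rewrite (core6 t0 rwok).
rewrite -E4 -E5 -E6 /=.
transitivity (TM (TC (sgn pY * t * (sgn (pZ && ~~ pY) / t))) (TC 0 : term (gen N))); last exact: TMt0.
apply: cg_mul => //; apply: cg_rel.
exact: (r6b d q f a b e c mn Aii).
Qed.
End Serre.

Lemma tauS_tsub N (x y : term (gen N)) : tsubst (@tau N) (tsub x y) = tsub (tsubst (@tau N) x) (tsubst (@tau N) y).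
Proof. by []. Qed.
Lemma tauS_tscal N c (x : term (gen N)) : tsubst (@tau N) (tscal c x) = tscal c (tsubst (@tau N) x).
Proof. by []. Qed.
Lemma tauS_TM N (x y : term (gen N)) : tsubst (@tau N) (TM x y) = TM (tsubst (@tau N) x) (tsubst (@tau N) y).
Proof. by []. Qed.
Lemma tauS_TA N (x y : term (gen N)) : tsubst (@tau N) (TA x y) = TA (tsubst (@tau N) x) (tsubst (@tau N) y).
Proof. by []. Qed.
Lemma tauS_TC N c : tsubst (@tau N) (TC c) = TC c.
Proof. by []. Qed.
Lemma tauS_tneg N (x : term (gen N)) : tsubst (@tau N) (tneg x) = tneg (tsubst (@tau N) x).
Proof. by []. Qed.
Ltac pushT := do 3! rewrite ?tauS_tsub ?tauS_tneg ?tauS_tscal ?tauS_TM ?tauS_TA ?tauS_TC.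

Lemma tsum4 X (x1 x2 x3 x4 : term X) : tsum [:: x1; x2; x3; x4] = TA x1 (TA x2 (TA x3 (TA x4 (TC 0)))).
Proof. by []. Qed.
Lemma swap_mid X (R : term X -> term X -> Prop) x y z r x' y' z' r' :
  congr R (TA x (TA z (TA y r))) (TA x' (TA z' (TA y' r'))) ->
  congr R (TA x (TA y (TA z r))) (TA x' (TA y' (TA z' r'))).
Proof.
have sw : forall a b c d : term X, congr R (TA a (TA b (TA c d))) (TA a (TA c (TA b d))).
  by move=> a b c d; rewrite (addtA b) (addtC b c) -addtA.
by move=> h; rewrite sw h sw.
Qed.

Lemma tauS_tsum4 N (x1 x2 x3 x4 : term (gen N)) :
  tsubst (@tau N) (TA x1 (TA x2 (TA x3 (TA x4 (TC 0))))) =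
  TA (tsubst (@tau N) x1) (TA (tsubst (@tau N) x2) (TA (tsubst (@tau N) x3) (TA (tsubst (@tau N) x4) (TC 0)))).
Proof. by []. Qed.

Section WD.
Variables (N m n : nat) (s : 'Z_N -> int) (d q : CC).
Hypotheses (N3 : (2 < N)%N) (s1 : forall i, s i = 1 \/ s i = -1) (q0 : q != 0)
  (H6 : forall i, (m * n != 2)%N -> Amat s i i = 0 -> (3 < N)%N).
Local Notation s' := (sneg s).
Local Notation R' := (Defs.rel n m s' d q^-1).
Local Notation tauS := (tsubst (@tau N)).
Local Notation "a ≈ b" := (congr R' a b) (at level 70).

Lemma s1' i : s' i = 1 \/ s' i = -1.
Proof. by rewrite /sneg; case: (s1 (1 - i)) => ->; [right|left]. Qed.

Lemma transport l r l' r' c : tauS l ≈ tscal c l' -> tauS r ≈ tscal c r' -> l' ≈ r' ->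
  tauS l ≈ tauS r.
Proof. by move=> h1 h2 h3; rewrite h1 h2 h3. Qed.

Lemma tau_Xg f i r : tauS (Xg s f i r) ≈ tscal (epC f) (Xg s' f (- i) r).
Proof. exact: (mapsH_hX s R' f i r).1. Qed.

Ltac fin_sub := rewrite -?tsub_scal ?tscalA; apply: tsub_proper; apply: tscal_eq.

Lemma rel_ok t u : Defs.rel m n s d q t u -> tauS t ≈ tauS u.
Proof.
case=> {t u}.
- by move=> i; apply: cg_rel; apply: r0_KKinv.
- by move=> i; apply: cg_rel; apply: r0_KinvK.
- by move=> i j; apply: cg_rel; apply: r1_KK.
- move=> f i j r.
  have T := cg_rel (@r1_KX _ n m s' d q^-1 f (- i) (- j) r).
  rewrite Amat_neg mulrN expVN in T.
  apply: (transport (c := epC f) _ _ T).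
  + change (TM (TM (TG (GK (- i))) (tauS (Xg s f j r))) (TG (GKinv (- i))) ≈
        tscal (epC f) (TM (TM (TG (GK (- i))) (Xg s' f (- j) r)) (TG (GKinv (- i))))).
    by rewrite tau_Xg TM_scalr TM_scall.
  + change (tscal (q ^ (ep f * Amat s i j)) (tauS (Xg s f j r)) ≈
        tscal (epC f) (tscal (q ^ (ep f * Amat s i j)) (Xg s' f (- j) r))).
    by rewrite tau_Xg tscalAC.
- move=> p i j a b.
  change (TM (tauS (Kser q p i a)) (tauS (Kser q p j b)) ≈ TM (tauS (Kser q p j b)) (tauS (Kser q p i a))).
  rewrite !tau_Kser; apply: cg_rel; exact: r2_same.
- move=> i j a b.
  change (TM (tauS (Kser q false i a)) (tauS (Kser q true j b)) ≈ TM (tauS (Kser q true j b)) (tauS (Kser q false i a))).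
  rewrite !tau_Kser; apply: cg_rel; exact: r2_mp.
- move=> p f i j a b.
  have T := cg_rel (@r3 _ n m s' d q^-1 p f (- i) (- j) a b).
  rewrite (Mmat_neg s N3) Amat_neg mulrN expVN in T.
  apply: (transport (c := epC f) _ _ T).
  + pushT; rewrite !tau_Kser !tau_Xg !TM_scalr; fin_sub; ring.
  + pushT; rewrite !tau_Kser !tau_Xg !TM_scall; fin_sub; ring.
- move=> i j a b.
  have T := cg_rel (@r4 _ n m s' d q^-1 (- i) (- j) a b).
  rewrite Zeq_neg invrK in T.
  apply: (transport (c := epC false * epC true) _ _ T).
  + exact: (mapsH_sbr (mapsH_hX s R' false i a) (mapsH_hX s R' true j b)).
  + pushT; rewrite !tau_Kser tscalA; apply: tscal_eq.
    rewrite /epC -[q^-1 - q]opprB invrN; ring.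
- move=> f i j a b h.
  have h' : Amat s' (- i) (- j) = 0 by rewrite Amat_neg h oppr0.
  have T := cg_rel (@r5_zero _ n m s' d q^-1 f (- i) (- j) a b h').
  apply: (transport (c := epC f * epC f) _ _ T).
  + exact: (mapsH_sbr (mapsH_hX s R' f i a) (mapsH_hX s R' f j b)).
  + by rewrite tscalC0.
- move=> f i j a b h.
  have h' : Amat s' (- i) (- j) != 0 by rewrite Amat_neg oppr_eq0.
  have T := cg_rel (@r5 _ n m s' d q^-1 f (- i) (- j) a b h').
  rewrite (Mmat_neg s N3) Amat_neg mulrN expVN !par_neg in T.
  apply: (transport (c := epC f * epC f) _ _ T).
  + pushT; rewrite !tau_Xg !TM_scall !TM_scalr; fin_sub; ring.
  + pushT; rewrite !tau_Xg !TM_scall !TM_scalr; fin_sub; ring.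
- move=> f e i a b c h k.
  have h' : Amat s' (- i) (- i) != 0 by rewrite Amat_neg oppr_eq0.
  have T := cg_rel (@r6a _ n m s' d q^-1 f (~~ e) (- i) a b c h').
  have ek0 : forall e0 : bool, - (if e0 then i + 1 else i - 1) = (if ~~ e0 then - i + 1 else - i - 1).
    by case=> /=; ring.
  have ek : - k = (if ~~ e then - i + 1 else - i - 1) := ek0 e.
  have M (u v : int) := (mapsH_qbr s q (mapsH_hX s R' f i u)
     (mapsH_qbr s q (mapsH_hX s R' f i v) (mapsH_hX s R' f k c))).1.
  rewrite ek in M.
  apply: (transport (c := epC f * (epC f * epC f)) _ _ T).
  + by rewrite tauS_TA (M a b) (M b a) tscalDD.
  + by rewrite tscalC0.
- move=> f i a b c e mn Aii.
  have N4 := H6 mn Aii.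
  have Aii' : Amat s' (- i) (- i) = 0 by rewrite Amat_neg Aii oppr0.
  have mn' : (n * m != 2)%N by rewrite mulnC.
  have T := @swapped_serre N n m s' d q^-1 N4 s1' (invr_neq0 q0) (- i) Aii' mn' f a b c e.
  have e1 : - (i + 1) = - i - 1 by ring.
  have e2 : - (i - 1) = - i + 1 by ring.
  have M (u v : int) := (mapsH_qbr s q (mapsH_hX s R' f i u)
     (mapsH_qbr s q (mapsH_hX s R' f (i + 1) c)
        (mapsH_qbr s q (mapsH_hX s R' f i v) (mapsH_hX s R' f (i - 1) e)))).1.
  rewrite e1 e2 in M.
  apply: (transport (c := epC f * (epC f * (epC f * epC f))) _ _ T).
  + by rewrite tauS_TA (M a b) (M b a) tscalDD.
  + by rewrite tscalC0.
- move=> f i a1 a2 b1 b2 c mn h L R0.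
  have h' : Amat s' (- i) (- i) != 0 by rewrite Amat_neg oppr_eq0.
  have mn' : (n * m == 2)%N by rewrite mulnC.
  have T := cg_rel (@r6c _ n m s' d q^-1 f (- i) b1 b2 a1 a2 c mn' h').
  have e1 : - (i + 1) = - i - 1 by ring.
  have e2 : - (i - 1) = - i + 1 by ring.
  have ML (z1 z2 w1 w2 : int) := (mapsH_qbr s q (mapsH_hX s R' f (i - 1) z1)
     (mapsH_qbr s q (mapsH_hX s R' f (i + 1) w1)
        (mapsH_qbr s q (mapsH_hX s R' f (i - 1) z2)
           (mapsH_qbr s q (mapsH_hX s R' f (i + 1) w2) (mapsH_hX s R' f i c))))).1.
  have MR (z1 z2 w1 w2 : int) := (mapsH_qbr s q (mapsH_hX s R' f (i + 1) w1)
     (mapsH_qbr s q (mapsH_hX s R' f (i - 1) z1)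
        (mapsH_qbr s q (mapsH_hX s R' f (i + 1) w2)
           (mapsH_qbr s q (mapsH_hX s R' f (i - 1) z2) (mapsH_hX s R' f i c))))).1.
  rewrite e1 e2 in ML MR.
  rewrite /L /R0 !tsum4 in T *; rewrite 2!tauS_tsum4 !ML !MR.
  rewrite -[TC 0](tscalC0 (epC f * (epC f * (epC f * (epC f * epC f))))) !tscalDD.
  apply: tscal_proper; apply: swap_mid; symmetry; exact: T.
Qed.

Lemma wd t u : congr (Defs.rel m n s d q) t u -> tauS t ≈ tauS u.
Proof.
elim=> {t u}.
- by move=> t u /rel_ok.
- by move=> t; reflexivity.
- by move=> t u _ IH; symmetry.
- by move=> t u v _ IH1 _ IH2; rewrite IH1.
- by move=> t t' u u' _ IH1 _ IH2; apply: cg_add.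
- by move=> t t' u u' _ IH1 _ IH2; apply: cg_mul.
all: move=> *; first [exact: cg_addA | exact: cg_addC | exact: cg_add0 | exact: cg_mulA
  | exact: cg_mul1l | exact: cg_mul1r | exact: cg_mulDl | exact: cg_mulDr | exact: cg_mul0l
  | exact: cg_cstC | exact: cg_cstD | exact: cg_cstM].
Qed.
End WD.

Lemma tsubst_congr_id X (R : term X -> term X -> Prop) (g : X -> term X) t :
  (forall x, congr R (g x) (TG x)) -> congr R (tsubst g t) t.
Proof.
move=> h; elim: t => [x|c|a IHa b IHb|a IHa b IHb] /=; [exact: h | reflexivity | |].
- by rewrite IHa IHb.
- by rewrite IHa IHb.
Qed.

Lemma tau_invol N (R : term (gen N) -> term (gen N) -> Prop) t :
  congr R (tsubst (@tau N) (tsubst (@tau N) t)) t.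
Proof.
rewrite tsubst_comp; apply: tsubst_congr_id => -[i r|i r|i r|i r|i|i] /=; rewrite ?opprK //.
all: (etransitivity; first exact: tscalA); rewrite mulrNN mulr1 ?opprK; exact: tscal1.
Qed.

Lemma snegK N (s : 'Z_N -> int) : sneg (sneg s) = s.
Proof. apply: functional_extensionality => i; rewrite /sneg opprK; congr s; ring. Qed.

Lemma H6_of m n (s : 'Z_(m + n) -> int) :
  (3 <= m + n)%N -> (forall i, s i = 1 \/ s i = -1) ->
  #|[set i : 'Z_(m + n) | s i == 1]| = m ->
  forall i, (m * n != 2)%N -> Amat s i i = 0 -> (3 < m + n)%N.
Proof.
move=> N3 s1 card i mn A0.
rewrite ltn_neqAle N3 andbT; apply/eqP => N3e.
have e01 : (i == i + 1) = false by apply: (zneq (k:=1)); [lia | ring].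
have sum0 : s i + s (i + 1) = 0.
  by move: A0; rewrite /Amat eqxx e01 eq_sym e01 /=; lia.
set S := [set j : 'Z_(m + n) | s j == 1].
have [jin [jout [hin hout]]] : exists j j', s j = 1 /\ s j' <> 1.
  case: (s1 i) => h; [exists i, (i + 1) | exists (i + 1), i]; split; lia.
have c0 : (0 < #|S|)%N by apply/card_gt0P; exists jin; rewrite inE hin.
have eN : #|[set: 'Z_(m + n)]| = (m + n)%N.
  by rewrite cardsT card_ord Zp_cast //; lia.
have c1 : (#|S| < #|[set: 'Z_(m + n)]|)%N.
  apply: proper_card; apply/properP; split; first exact: subsetT.
  by exists jout; rewrite ?inE //; apply/eqP.
rewrite eN in c1.
rewrite card in c0 c1.
have en : n = (3 - m)%N by lia.
move: mn; rewrite en.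
have [->|->] : m = 1%N \/ m = 2%N by lia.
all: by [].
Qed.

Unset Implicit Arguments.
Set Strict Implicit.
Set Printing Implicit Defensive.

Theorem lemma2p1 (m n : nat) (s : 'Z_(m + n) -> int) (d q : CC) :
  m != n -> (3 <= m + n)%N ->
  (forall i, s i = 1 \/ s i = -1) ->
  #|[set i : 'Z_(m + n) | s i == 1]| = m ->
  d != 0 -> q != 0 ->
  (forall a b c : int,
      (d / q) ^ a * (q ^+ 2) ^ b * (d^-1 / q) ^ c = 1 -> a = b /\ b = c) ->
  let s' : 'Z_(m + n) -> int := fun i => - s (1 - i) in
  exists g : gen (m + n) -> term (gen (m + n)),
    (* tau is well defined on E_s --> E_{s'}(q3^-1,q2^-1,q1^-1) *)
    (forall t u, Eeq m n s d q t u ->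
                 Eeq n m s' d q^-1 (tsubst g t) (tsubst g u)) /\
    (* injective *)
    (forall t u, Eeq n m s' d q^-1 (tsubst g t) (tsubst g u) ->
                 Eeq m n s d q t u) /\
    (* surjective *)
    (forall u, exists t, Eeq n m s' d q^-1 (tsubst g t) u) /\
    (* even map of superalgebras *)
    (forall x, exists t, homog (gpar s') (gpar s x) t /\
                         Eeq n m s' d q^-1 (g x) t) /\
    (* values on generating series *)
    (forall i r, Eeq n m s' d q^-1 (g (GE i r)) (TG (GE (- i) r))) /\
    (forall i r, Eeq n m s' d q^-1 (g (GF i r)) (tneg (TG (GF (- i) r)))) /\
    (forall p i k, Eeq n m s' d q^-1 (tsubst g (Kser q p i k))
                                     (Kser q^-1 p (- i) k)).
Proof.
move=> _ N3 s1 card _ q0 _ s'.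
have N3' : (2 < m + n)%N by lia.
have H6 := @H6_of m n s N3 s1 card.
have H6' : forall i, (n * m != 2)%N -> Amat (sneg s) i i = 0 -> (3 < m + n)%N.
  move=> i mn A0; apply: (H6 (- i)); first by rewrite mulnC.
  have := Amat_neg s (- i) (- i); rewrite !opprK A0 => /eqP.
  by rewrite eq_sym oppr_eq0 => /eqP.
have s1n := s1' s1.
exists (@tau (m + n)).
split; [|split; [|split; [|split; [|split; [|split]]]]].
- move=> t u; exact: (wd N3' s1 q0 H6).
- move=> t u h.
  have := wd (m := n) (n := m) (s := sneg s) (d := d) (q := q^-1) N3' s1n (invr_neq0 q0) H6' h.
  by rewrite invrK snegK /Eeq !tau_invol.
- move=> u; exists (tsubst (@tau (m + n)) u); exact: tau_invol.
- move=> x; exists (tau x); split; last reflexivity.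
  case: x => [i r|i r|i r|i r|i|i] /=.
  + by have := h_gen (gpar s') (GE (- i) r); rewrite /= (par_neg s).
  + by have := h_mul (h_cst (gpar s') (-1)) (h_gen (gpar s') (GF (- i) r)); rewrite /= (par_neg s).
  + exact: (h_mul (h_cst (gpar s') (-1)) (h_gen (gpar s') (GHp (- i) r))).
  + exact: (h_mul (h_cst (gpar s') (-1)) (h_gen (gpar s') (GHm (- i) r))).
  + exact: (h_gen (gpar s') (GK (- i))).
  + exact: (h_gen (gpar s') (GKinv (- i))).
- by move=> i r; reflexivity.
- by move=> i r; reflexivity.
- by move=> p i k; exact: tau_Kser.
Qed.
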